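(* Let $A_0,\ldots,A_m\in\mathbb{R}^{n\times n}$, $\tau_0=0$, $\tau_1,\ldots,\tau_m>0$, weights $w_0,\ldots,w_m\in(0,\infty]$ with at least one finite ($1/\infty:=0$), $\epsilon>0$, and $\sigma\in\mathbb{R}$. Put $w(\sigma)=\sum_{i=0}^m e^{-\sigma\tau_i}/w_i$, $A_{\sigma,0}=A_0-\sigma I_n$, $A_{\sigma,i}=A_ie^{-\tau_i\sigma}$ ($1\le i\le m$), and for $\xi>0$ let $$H(\lambda,\sigma,\xi)=\lambda I_{2n}-\begin{pmatrix}A_{\sigma,0}&\xi^{-2}I_n\\-I_n&-A_{\sigma,0}^*\end{pmatrix}-\sum_{i=1}^m\left(\begin{pmatrix}A_{\sigma,i}&0\\0&0\end{pmatrix}e^{-\lambda\tau_i}+\begin{pmatrix}0&0\\0&-A_{\sigma,i}^*\end{pmatrix}e^{\lambda\tau_i}\right).$$ Define $h_\sigma(\lambda)=\det H\big(\lambda,\sigma,\frac{1}{\epsilon w(\sigma)}\big)$. Then for every $\omega\ge 0$, $\Im\, h_\sigma(j\omega)=0$ and $\Re\, h_\sigma'(j\omega)=0$.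
   Context: $h_\sigma'$ denotes the derivative of the entire function $\lambda\mapsto h_\sigma(\lambda)$. *)

(* Defs.v *)
From mathcomp Require Import all_boot all_order all_algebra.
From mathcomp Require Import all_classical all_reals all_analysis.
From mathcomp Require Export complex.
Import Order.TTheory GRing.Theory Num.Theory.
Import numFieldNormedType.Exports.

Set Implicit Arguments.
Unset Strict Implicit.
Unset Printing Implicit Defensive.

Local Open Scope ring_scope.
Local Open Scope complex_scope.

Definition Cx (R : realType) : numFieldType := (R[i] : numFieldType).

Definition cexp (R : realType) (z : R[i]) : R[i] :=
  (expR (complex.Re z))%:C * (cos (complex.Im z) +i* sin (complex.Im z)).

Definition winv (R : realType) (w : \bar R) : R :=
  if w is r%:E then r^-1 else 0.

Definition wsig (R : realType) (m : nat) (tau : 'I_m.+1 -> R)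
  (w : 'I_m.+1 -> \bar R) (sigma : R) : R :=
  \sum_(i < m.+1) expR (- sigma * tau i) * winv (w i).

Definition Asig0 (R : realType) (n m : nat) (A : 'I_m.+1 -> 'M[R]_n)
  (sigma : R) : 'M[R]_n := A ord0 - sigma%:M.
Definition Asig (R : realType) (n m : nat) (A : 'I_m.+1 -> 'M[R]_n)
  (tau : 'I_m.+1 -> R) (sigma : R) (i : 'I_m.+1) : 'M[R]_n :=
  expR (- tau i * sigma) *: A i.

Definition toCmx (R : realType) (p q : nat) (M : 'M[R]_(p, q)) : 'M[R[i]]_(p, q) :=
  map_mx (fun x => x%:C) M.

(* H(lambda, sigma, xi); for real matrices A^* = A^T *)
Definition Hmat (R : realType) (n m : nat) (A : 'I_m.+1 -> 'M[R]_n)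
  (tau : 'I_m.+1 -> R) (lam : R[i]) (sigma xi : R) : 'M[R[i]]_(n + n) :=
  lam%:M
  - block_mx (toCmx (Asig0 A sigma)) ((xi ^- 2)%:C)%:M
             (- 1%:M) (- (toCmx (Asig0 A sigma))^T)
  - \sum_(i < m.+1 | i != ord0)
      (cexp (- lam * (tau i)%:C) *: block_mx (toCmx (Asig A tau sigma i)) 0 0 0
       + cexp (lam * (tau i)%:C) *: block_mx 0 0 0 (- (toCmx (Asig A tau sigma i))^T)).

Definition hsig (R : realType) (n m : nat) (A : 'I_m.+1 -> 'M[R]_n)
  (tau : 'I_m.+1 -> R) (w : 'I_m.+1 -> \bar R) (eps sigma : R)
  (lam : Cx R) : Cx R :=
  \det (Hmat A tau lam sigma (1 / (eps * wsig tau w sigma))).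

(* Main.v *)
Require Import Defs.
From mathcomp Require Import all_boot all_order all_algebra.
From mathcomp Require Import all_classical all_reals all_analysis.
From mathcomp Require Import complex ring lra.
Import Order.TTheory GRing.Theory Num.Theory.
Import numFieldNormedType.Exports.
Local Open Scope ring_scope.
Local Open Scope complex_scope.
Local Open Scope classical_set_scope.

Lemma conj_cexp (R : realType) (z : R[i]) : (cexp z)^* = cexp (z^*).
Proof.
case: z => a b; rewrite /cexp /= cosN sinN.
by apply/eqP; rewrite eq_complex /=; apply/andP; split; apply/eqP; ring.
Qed.

Lemma conj_toCmx (R : realType) p q (M : 'M[R]_(p,q)) :
  map_mx conjc (toCmx M) = toCmx M.
Proof. by apply/matrixP => i j; rewrite !mxE /= oppr0. Qed.

Lemma Hmat_conj (R : realType) (n m : nat) (A : 'I_m.+1 -> 'M[R]_n)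
  (tau : 'I_m.+1 -> R) (lam : R[i]) (sigma xi : R) :
  map_mx conjc (Hmat A tau lam sigma xi) = Hmat A tau (lam^*) sigma xi.
Proof.
rewrite /Hmat !map_mxB map_scalar_mx /= map_block_mx map_mx_sum.
congr (_ - _ - _).
  by rewrite !map_mxN -map_trmx conj_toCmx map_scalar_mx map_mx1 /= oppr0.
apply: eq_bigr => i _.
rewrite map_mxD !map_mxZ !map_block_mx !map_mx0 map_mxN -map_trmx !conj_toCmx.
congr (_ *: _ + _ *: _).
  by rewrite -[LHS]/((cexp _)^*) conj_cexp /= rmorphM /= rmorphN /= oppr0.
by rewrite -[LHS]/((cexp _)^*) conj_cexp /= rmorphM /= oppr0.
Qed.


Section J.
Variable (C : comNzRingType) (n : nat).
Definition Jm : 'M[C]_(n + n) := block_mx 0 1%:M (-1%:M) 0.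

Lemma JJ : Jm *m Jm = - 1%:M.
Proof.
rewrite /Jm mulmx_block.
rewrite ?mulmx0 ?mul0mx ?mulmx1 ?mul1mx ?mulmxN ?mulNmx ?mulmx0 ?mul0mx ?mulmx1 ?mul1mx ?addr0 ?add0r ?oppr0 ?opprK ?linearN /= ?trmxK ?trmx0 ?trmx1 ?tr_scalar_mx ?oppr0 ?opprK.
rewrite (scalar_mx_block n n 1) opp_block_mx. by rewrite !oppr0.
Qed.

Lemma Jsc (a : C) : Jm *m a%:M *m Jm = - a%:M.
Proof. by rewrite mul_mx_scalar -scalemxAl JJ scalerN scalemx1. Qed.

Lemma JB (X : 'M[C]_n) (c : C) :
  Jm *m block_mx X c%:M (- 1%:M) (- X^T) *m Jm =
  (block_mx X c%:M (- 1%:M) (- X^T))^T.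
Proof.
rewrite /Jm !mulmx_block tr_block_mx.
rewrite ?mulmx0 ?mul0mx ?mulmx1 ?mul1mx ?mulmxN ?mulNmx ?mulmx0 ?mul0mx ?mulmx1 ?mul1mx ?addr0 ?add0r ?oppr0 ?opprK ?linearN /= ?trmxK ?trmx0 ?trmx1 ?tr_scalar_mx ?oppr0 ?opprK.
by [].

Qed.

Lemma JM1 (X : 'M[C]_n) :
  Jm *m block_mx X 0 0 0 *m Jm = (block_mx 0 0 0 (- X^T))^T.
Proof.
rewrite /Jm !mulmx_block tr_block_mx.
rewrite ?mulmx0 ?mul0mx ?mulmx1 ?mul1mx ?mulmxN ?mulNmx ?mulmx0 ?mul0mx ?mulmx1 ?mul1mx ?addr0 ?add0r ?oppr0 ?opprK ?linearN /= ?trmxK ?trmx0 ?trmx1 ?tr_scalar_mx ?oppr0 ?opprK.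
by [].

Qed.

Lemma JM2 (X : 'M[C]_n) :
  Jm *m block_mx 0 0 0 (- X^T) *m Jm = (block_mx X 0 0 0)^T.
Proof.
rewrite /Jm !mulmx_block tr_block_mx.
rewrite ?mulmx0 ?mul0mx ?mulmx1 ?mul1mx ?mulmxN ?mulNmx ?mulmx0 ?mul0mx ?mulmx1 ?mul1mx ?addr0 ?add0r ?oppr0 ?opprK ?linearN /= ?trmxK ?trmx0 ?trmx1 ?tr_scalar_mx ?oppr0 ?opprK.
by [].

Qed.

Lemma detJ : \det Jm * \det Jm = 1.
Proof.
rewrite -det_mulmx JJ.
have -> : - 1%:M = (-1)%:M :> 'M[C]_(n+n) by rewrite raddfN.
by rewrite det_scalar -signr_odd addnn odd_double.
Qed.
End J.

Lemma Hmat_J (R : realType) (n m : nat) (A : 'I_m.+1 -> 'M[R]_n)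
  (tau : 'I_m.+1 -> R) (lam : R[i]) (sigma xi : R) :
  Jm _ n *m Hmat A tau lam sigma xi *m Jm _ n = (Hmat A tau (- lam) sigma xi)^T.
Proof.
rewrite /Hmat !mulmxBr !mulmxBl Jsc JB mulmx_sumr mulmx_suml.
rewrite !linearB /= tr_scalar_mx [(- lam)%:M]raddfN.
congr (_ - _).
rewrite linear_sum /=; apply: eq_bigr => i _.
rewrite mulmxDr mulmxDl -!scalemxAr -!scalemxAl JM1 JM2.
rewrite linearD !linearZ /= opprK addrC.
by [].
Qed.

Lemma hsig_sym (R : realType) (n m : nat) (A : 'I_m.+1 -> 'M[R]_n)
  (tau : 'I_m.+1 -> R) (w : 'I_m.+1 -> \bar R) (eps sigma : R) (lam : R[i]) :
  hsig A tau w eps sigma (- conjc lam) = (hsig A tau w eps sigma lam)^*.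
Proof.
rewrite /hsig.
set xi := 1 / _.
rewrite -[RHS]/(conjc (\det (Hmat A tau lam sigma xi))).
rewrite -(det_map_mx (conjc : {rmorphism R[i] -> R[i]})) /= Hmat_conj.
rewrite -det_tr -Hmat_J !det_mulmx.
by rewrite mulrAC detJ mul1r.
Qed.

Lemma conjcB (R : realType) (x y : R[i]) : conjc (x - y) = conjc x - conjc y.
Proof. exact: raddfB. Qed.
Lemma conjcB' (R : realType) (x y : R[i]) : - conjc (x - y) = - conjc x + conjc y.
Proof. by rewrite conjcB opprB addrC. Qed.
Lemma conjcD (R : realType) (x y : R[i]) : conjc (x + y) = conjc x + conjc y.
Proof. exact: raddfD. Qed.
Lemma conjcN (R : realType) (x : R[i]) : conjc (- x) = - conjc x.
Proof. exact: raddfN. Qed.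
Lemma conjcM (R : realType) (x y : R[i]) : conjc (x * y) = conjc x * conjc y.
Proof. exact: rmorphM. Qed.
Lemma scaleCx (R : realType) (x y : Cx R) : x *: y = x * y.
Proof. by []. Qed.

Lemma norm_conj (R : realType) (x : Cx R) : `|conjc x| = `|x|.
Proof.
case: x => a b.
rewrite -[LHS]/((Normc.normc (a -i* b))%:C) -[RHS]/((Normc.normc (a +i* b))%:C).
by rewrite /= sqrrN.
Qed.

Lemma near_conj (R : realType) (P : Cx R -> Prop) :
  (\forall t \near (0 : Cx R)^', P t) -> \forall t \near (0 : Cx R)^', P (- conjc t).
Proof.
move=> HP.
have cont : (- conjc t) @[t --> (0 : Cx R)] --> (0 : Cx R).
  apply: (iffRL (@cvgrPdist_lt _ (Cx R) _ (nbhs (0:Cx R)) _ (fun t : Cx R => - conjc t) 0)) => e e0.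
  have cid : t @[t --> (0:Cx R)] --> (0:Cx R) := cvg_id.
  have H := (@cvgrPdist_lt _ (Cx R) _ (nbhs (0:Cx R)) _ (fun t : Cx R => t) 0).1 cid e e0.

  apply: (@filterS _ (nbhs (0:Cx R)) _ _ _ _ (H _)) => t.
  by rewrite !sub0r !normrN norm_conj.
have H := cont _ HP.
apply: (@filterS _ (nbhs (0:Cx R)) _ _ _ _ H) => t Ht t0.
apply: Ht.
by rewrite oppr_eq0 conjc_eq0.
Qed.

Theorem proposition2 (R : realType) (n m : nat) (A : 'I_m.+1 -> 'M[R]_n)
  (tau : 'I_m.+1 -> R) (w : 'I_m.+1 -> \bar R) (eps sigma : R) :
  tau ord0 = 0 ->
  (forall i : 'I_m.+1, i != ord0 -> 0 < tau i) ->
  (forall i : 'I_m.+1, (0 < w i)%E) ->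
  (exists i : 'I_m.+1, w i \is a fin_num) ->
  0 < eps ->
  forall omega : R, 0 <= omega ->
    complex.Im (hsig A tau w eps sigma (0 +i* omega)) = 0 /\
    complex.Re (derive1 (hsig A tau w eps sigma) (0 +i* omega)) = 0.
Proof.
move=> _ _ _ _ _ omega _.
set h := hsig A tau w eps sigma.
have hs : forall lam : R[i], h (- conjc lam) = conjc (h lam) := @hsig_sym R n m A tau w eps sigma.
set a : Cx R := 0 +i* omega.
have ha : - conjc a = a.
  by apply/eqP; rewrite eq_complex /= oppr0 opprK !eqxx.
have hreal : conjc (h a) = h a by rewrite -hs ha.
split.
  move: hreal; case: (h a) => x y /eqP; rewrite eq_complex /= => /andP[_ /eqP].
  move=> H; lra.
pose g := fun t : Cx R => t^-1 *: (h (t + a) - h a).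
have gs : forall t, g (- conjc t) = - conjc (g t).
  move=> t; rewrite /g.
  have e1 : - conjc t + a = - conjc (t + a) by rewrite rmorphD opprD ha.
  rewrite e1 hs -[in LHS]hreal.
  move: (h (t + a)) (h a) => X Y.
  by rewrite !scaleCx -conjcB invrN -conjc_inv mulNr -conjcM.
change (complex.Re (lim (g @ 0^')) = 0).
rewrite /lim /lim_in; case: xgetP => [l _ Hl | _ ]; last by [].
have Hl0 : g @ (0 : Cx R)^' --> (l : Cx R) := Hl.
have Hl' : g @ (0 : Cx R)^' --> (- conjc l : Cx R).
  apply: (iffRL (@cvgrPdist_lt _ (Cx R) _ ((0 : Cx R)^') _ g (- conjc l))) => e e0.
  have H := (@cvgrPdist_lt _ (Cx R) _ ((0 : Cx R)^') _ g l).1 Hl0 e e0.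
  have H2 := @near_conj R _ (H _).
  apply: (@filterS _ ((0 : Cx R)^') _ _ _ _ (H2 _)) => t.
  rewrite gs opprK.
  have -> : - conjc l - g t = - conjc (l + conjc (g t)).
    by rewrite conjcD conjcK opprD.
  by rewrite normrN norm_conj.
have E := @cvg_unique _ (@norm_hausdorff _ (Cx R)) _ (fmap_proper_filter g (Proper_dnbhs_numFieldType (0:Cx R))) _ _ Hl0 Hl'.
move: E; clear; case: l => x y /(congr1 (@complex.Re R)) /= H.
lra.
Qed.
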